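(* Consider the recursive network formation model with the utility function described in the context. If $$b_1-b_2+\gamma b_2 \le c < b_1 \quad\text{and}\quad c_0 < (1-\gamma)(b_2-b_3),$$ then the resulting topology is a star: starting from a single node, for every $n\ge 1$, the pairwise stable network reached after the $n$-th node has entered is a star on $n$ nodes (one center adjacent to all other nodes, and no other links), irrespective of the random order in which nodes are selected to move.
   Context: Networks are finite simple undirected graphs whose vertices (nodes) are self-interested agents. Parameters: benefits $b_1>b_2>b_3>b_4>\dots>0$, where $b_i$ is the benefit a node obtains from a node at distance $i$; a link cost $c$ per immediate neighbor; an intermediation fraction $\gamma$ with $0\le\gamma<1$; and a network entry factor $c_0$. Notation: $N$ is the set of nodes currently in the network, $d_j$ the degree of $j$, and $l(j,w)$ the graph distance. A node $x$ is essential for a pair $y,z$ (with $x\notin\{y,z\}$) if $x$ lies on every path joining $y$ and $z$. Write $E(y,z)$ for the set of nodes essential for $y,z$ and $e(y,z)=|E(y,z)|$. Only pairs joined by a path contribute to the sums below. Utility of node $j$ in network $g$: $$u_j(g)=-c_0\,d_{T(j)}\mathbf 1_{\{j=\mathrm{NE}\}}+d_j(b_1-c)+\sum_{w\in N,\ l(j,w)>1}b_{l(j,w)}-\sum_{w\in N,\ E(j,w)\ne\emptyset}\gamma\, b_{l(j,w)}+\sum_{y,z\in N,\ j\in E(y,z)}\frac{\gamma}{e(y,z)}\,2\,b_{l(y,z)}.$$ Here $\mathbf 1_{\{j=\mathrm{NE}\}}=1$ exactly when $j$ is a newly entering node evaluating the creation of its first link. $T(j)$ is the existing node to which $j$ forms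 that first link, and $d_{T(j)}$ is that node's degree before the link. The network before entry gives the entering node utility $0$. Pairwise stability: $g$ is pairwise stable if (a) for every link $(i,j)\in g$, $u_i(g\setminus\{(i,j)\})\le u_i(g)$ and $u_j(g\setminus\{(i,j)\})\le u_j(g)$; and (b) for every non-link $(i,j)\notin g$, if $u_i(g\cup\{(i,j)\})>u_i(g)$ then $u_j(g\cup\{(i,j)\})<u_j(g)$. Recursive model of network formation: - The process starts with a single node. - When the current network of $n-1$ nodes is pairwise stable, a new node considers entering. Its options are to stay out or to propose a link to one existing node. The link forms iff the receiving node's utility does not decrease. No existing node can link to the newcomer before it has formed this first link. - After entry, nodes are repeatedly chosen at random to move. A chosen node plays a myopic best response among three options: create a link with a non-neighbor (the link forms only if the other node's utility does not decrease, which the proposer anticipates); delete a link with a neighbor (unilaterally); or keep the status quo. It alters a link only if this strictly increases its current utility. - This continues until the network is pairwise stable; then the next node considers entering, and so on. ''The resulting topology is X'' means: for every number $n$ of nodes, every pairwise stable network reached after the $n$-th node has entered is a network of topology X on $n$ nodes, irrespective of the random choices. *)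

(* Defs.v *)
(* Nodes are natural numbers 0..n-1; a network on n nodes is
   given by its node count n and a raw edge relation e : rel nat, of which only
   the symmetrised, loop-free part among nodes < n is meaningful (see [adj]). *)
From HB Require Import structures.
From mathcomp Require Import all_boot all_order all_algebra.
Set Implicit Arguments. Unset Strict Implicit. Unset Printing Implicit Defensive.
Import Order.TTheory GRing.Theory Num.Theory.

Definition adj (n : nat) (e : rel nat) : rel nat :=
  fun x y => [&& x < n, y < n, x != y & e x y || e y x].

Fixpoint reachw (n : nat) (a : rel nat) (k : nat) (y z : nat) : bool :=
  if k is k'.+1 then
    reachw n a k' y z || [exists w : 'I_n, reachw n a k' y w && a w z]
  else y == z.

(* connected: joined by a path (a path has at most n-1 edges) *)
Definition connected (n : nat) (a : rel nat) (y z : nat) : bool :=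
  reachw n a n y z.

(* graph distance l(y,z): least k such that z is within k edges of y
   (only meaningful for connected pairs) *)
Definition dist (n : nat) (a : rel nat) (y z : nat) : nat :=
  find (fun k => reachw n a k y z) (iota 0 n).

Definition avoid (a : rel nat) (x : nat) : rel nat :=
  fun u v => [&& a u v, u != x & v != x].

Definition essential (n : nat) (a : rel nat) (x y z : nat) : bool :=
  [&& x < n, x != y, x != z, connected n a y z & ~~ connected n (avoid a x) y z].

Definition ecount (n : nat) (a : rel nat) (y z : nat) : nat :=
  #|[pred x : 'I_n | essential n a x y z]|.

Definition deg (n : nat) (e : rel nat) (j : nat) : nat :=
  #|[pred w : 'I_n | adj n e j w]|.

Local Open Scope ring_scope.

(* utility of node j, without the entry term (which is added separately in the
   entry step of the formation process) *)
Definition utility (R : realFieldType) (b : nat -> R) (c gam : R)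
    (n : nat) (e : rel nat) (j : nat) : R :=
  let a := adj n e in
  (deg n e j)%:R * (b 1%N - c)
  + \sum_(w < n | connected n a j w && (1 < dist n a j w)%N) b (dist n a j w)
  - \sum_(w < n | [exists x : 'I_n, essential n a x j w]) gam * b (dist n a j w)
  + \sum_(y < n) \sum_(z < n | (y < z)%N && essential n a j y z)
       gam / (ecount n a y z)%:R * 2 * b (dist n a y z).

Definition add_link (e : rel nat) (i j : nat) : rel nat :=
  fun x y => e x y || ((x == i) && (y == j)) || ((x == j) && (y == i)).

Definition del_link (e : rel nat) (i j : nat) : rel nat :=
  fun x y => e x y && ~~ (((x == i) && (y == j)) || ((x == j) && (y == i))).

Definition pairwise_stable (R : realFieldType) (b : nat -> R) (c gam : R)
    (n : nat) (e : rel nat) : Prop :=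
  (forall i j : nat, adj n e i j ->
      utility b c gam n (del_link e i j) i <= utility b c gam n e i /\
      utility b c gam n (del_link e i j) j <= utility b c gam n e j) /\
  (forall i j : nat, (i < n)%N -> (j < n)%N -> i != j -> ~~ adj n e i j ->
      utility b c gam n e i < utility b c gam n (add_link e i j) i ->
      utility b c gam n (add_link e i j) j < utility b c gam n e j).

(* the networks node i can bring about by one of its options other than the
   status quo: delete a link unilaterally, or create a link with a non-neighbor
   j that j accepts (j's utility does not decrease) *)
Definition option_result (R : realFieldType) (b : nat -> R) (c gam : R)
    (n : nat) (e : rel nat) (i : nat) (e' : rel nat) : Prop :=
  (exists j, adj n e i j /\ e' = del_link e i j) \/
  (exists j, [/\ (j < n)%N, j != i, ~~ adj n e i j,
     utility b c gam n e j <= utility b c gam n (add_link e i j) j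
     & e' = add_link e i j]).

(* entry of the new node n linking to the existing node T, in network (n,e):
   acceptance by T and the entering node's payoff (with the entry term) *)
Definition entry_accepts (R : realFieldType) (b : nat -> R) (c gam : R)
    (n : nat) (e : rel nat) (T : nat) : Prop :=
  utility b c gam n e T <= utility b c gam n.+1 (add_link e n T) T.

Definition entry_value (R : realFieldType) (b : nat -> R) (c gam c0 : R)
    (n : nat) (e : rel nat) (T : nat) : R :=
  utility b c gam n.+1 (add_link e n T) n - c0 * (deg n e T)%:R.

(* states reachable by the recursive formation process, starting from a single
   node, under any random choices *)
Inductive reachable (R : realFieldType) (b : nat -> R) (c gam c0 : R) :
    nat -> rel nat -> Prop :=
| reach_init : reachable b c gam c0 1 (fun _ _ => false)
| reach_entry n e T :
    reachable b c gam c0 n e ->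
    pairwise_stable b c gam n e ->
    (T < n)%N ->
    entry_accepts b c gam n e T ->
    0 < entry_value b c gam c0 n e T ->
    (forall T', (T' < n)%N -> entry_accepts b c gam n e T' ->
        entry_value b c gam c0 n e T' <= entry_value b c gam c0 n e T) ->
    reachable b c gam c0 n.+1 (add_link e n T)
| reach_move n e i e' :
    reachable b c gam c0 n e ->
    (i < n)%N ->
    option_result b c gam n e i e' ->
    utility b c gam n e i < utility b c gam n e' i ->
    (forall e'', option_result b c gam n e i e'' ->
        utility b c gam n e'' i <= utility b c gam n e' i) ->
    reachable b c gam c0 n e'.

Definition is_star (n : nat) (e : rel nat) : Prop :=
  exists2 k, (k < n)%N &
    forall x y, (x < n)%N -> (y < n)%N -> x != y ->
      adj n e x y = (x == k) || (y == k).

(* Main.v *)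
Require Import Defs.
From HB Require Import structures.
From mathcomp Require Import all_boot all_order all_algebra.
From mathcomp Require Import zify ring lra.
From Stdlib Require Import FunctionalExtensionality.
Set Implicit Arguments. Unset Strict Implicit. Unset Printing Implicit Defensive.
Import Order.TTheory GRing.Theory Num.Theory.
Section Graph.
Variable N : nat.
Variable a : rel nat.
Hypothesis Hb : forall x y, a x y -> (x < N) && (y < N).

Lemma reach_refl m y : reachw N a m y y.
Proof. elim: m => [|m IH] /=; first by rewrite eqxx. by rewrite IH. Qed.

Lemma reach_S m y z : reachw N a m y z -> reachw N a m.+1 y z.
Proof. by move=> H /=; rewrite H. Qed.

Lemma reach_mono m m' y z : (m <= m')%N -> reachw N a m y z -> reachw N a m' y z.
Proof.
move=> /subnK <-; elim: (m' - m)%N => [//|d IH] H.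
by rewrite addSn; apply: reach_S; apply: IH.
Qed.

Lemma reach_step m y w z : reachw N a m y w -> a w z -> reachw N a m.+1 y z.
Proof.
move=> H1 H2 /=; apply/orP; right.
have /andP[hw _] := Hb H2.
by apply/existsP; exists (Ordinal hw); rewrite /= H1 H2.
Qed.

Lemma reach1 y z : reachw N a 1 y z = (y == z) || a y z.
Proof.
rewrite /=; congr (_ || _); apply/existsP/idP => [[w /andP[/eqP -> //]]|H].
have /andP[hw _] := Hb H.
by exists (Ordinal hw); rewrite /= eqxx H.
Qed.

Lemma reach_closed (P : pred nat) m y z : P y ->
  (forall w z, P w -> a w z -> P z) -> reachw N a m y z -> P z.
Proof.
move=> Py HP; elim: m z => [|m IH] z /=; first by move/eqP <-.
case/orP => [/IH //|/existsP[w /andP[/IH Hw Hwz]]].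
exact: HP Hwz.
Qed.

Lemma reach_bound m y z : reachw N a m y z -> (y == z) || ((y < N) && (z < N)).
Proof.
elim: m z => [|m IH] z /=; first by move->.
case/orP => [/IH //|/existsP[w /andP[/IH Hw Hwz]]].
have /andP[h1 h2] := Hb Hwz.
case/orP: Hw => [/eqP Hyw|/andP[Hy _]]; first by subst; rewrite h1 h2 orbT.
by rewrite Hy h2 orbT.
Qed.

Lemma dist_spec y z : connected N a y z -> reachw N a (dist N a y z) y z.
Proof.
move=> Hc; rewrite /dist.
case: (boolP (has (fun k => reachw N a k y z) (iota 0 N))) => Hh.
  have := nth_find 0 Hh.
  have Hf := Hh; rewrite has_find size_iota in Hf.
  by rewrite nth_iota ?add0n.
by rewrite (hasNfind Hh) size_iota.
Qed.

Lemma dist_min d y z : (d < dist N a y z)%N -> ~~ reachw N a d y z.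
Proof.
move=> Hd; have := before_find 0 Hd.
have Hs : (d < N)%N.
  apply: leq_trans Hd _; rewrite /dist.
  by have := find_size (fun k => reachw N a k y z) (iota 0 N); rewrite size_iota.
by rewrite nth_iota // add0n /= => ->.
Qed.

Lemma dist_le d y z : reachw N a d y z -> (dist N a y z <= d)%N.
Proof.
move=> H; rewrite leqNgt; apply/negP => /dist_min; by rewrite H.
Qed.

Lemma dist_gt d y z : connected N a y z -> ~~ reachw N a d y z -> (d < dist N a y z)%N.
Proof.
move=> Hc Hn; rewrite ltnNge; apply/negP => Hle.
by move: Hn; rewrite (reach_mono Hle (dist_spec Hc)).
Qed.

End Graph.
Lemma avoid_bound N (a : rel nat) x :
  (forall u v, a u v -> (u < N) && (v < N)) ->
  forall u v, avoid a x u v -> (u < N) && (v < N).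
Proof. by move=> Hb u v /andP[/Hb]. Qed.

Section Ess.
Variable N : nat.
Variable a : rel nat.
Hypothesis Hb : forall x y, a x y -> (x < N) && (y < N).
Let Hba x := @avoid_bound N a x Hb.

Lemma ess_basic x y z : essential N a x y z ->
  [/\ x != y, x != z, y != z, connected N a y z & ~~ a y z].
Proof.
case/and5P=> Hx Hxy Hxz Hc Hn; split => //.
  by apply/negP => /eqP E; subst z; move: Hn; rewrite /connected reach_refl.
apply/negP => Hyz; move: Hn; rewrite /connected.
have H1 : reachw N (avoid a x) 1 y z.
  by rewrite (reach1 (@Hba x)) /avoid Hyz (eq_sym y x) Hxy (eq_sym z x) Hxz orbT.
have /andP[hy _] := Hb Hyz.
have HN : (1 <= N)%N by apply: leq_ltn_trans hy.
by rewrite (reach_mono HN H1).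
Qed.

Lemma ess_dist x y z : essential N a x y z -> (1 < dist N a y z)%N.
Proof.
case/ess_basic=> _ _ Hyz Hc Hn; apply: dist_gt => //.
by rewrite (reach1 Hb) negb_or Hyz.
Qed.

Lemma ess_only x y z : (x < N)%N -> x != y -> x != z -> y != z ->
  connected N a y z -> (forall w, a y w -> w == x) -> essential N a x y z.
Proof.
move=> Hx Hxy Hxz Hyz Hc Ho; rewrite /essential Hx Hxy Hxz Hc /=.
apply/negP => H.
have : pred1 y z.
  apply: (reach_closed (P := pred1 y) _ _ H) => //= w z' /eqP -> /and3P[/Ho Hz _ Hz'].
  by move: Hz'; rewrite Hz.
by rewrite /= eq_sym (negbTE Hyz).
Qed.

Lemma ess_hub x k y z : x != k -> y != x -> z != x -> (y == k) || a y k ->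
  (k == z) || a k z -> (2 <= N)%N -> ~~ essential N a x y z.
Proof.
move=> Hxk Hyx Hzx Hyk Hkz HN; rewrite /essential negb_and; apply/orP; right.
rewrite !negb_and; apply/orP; right; apply/orP; right; apply/orP; right.
rewrite negbK /connected; apply: (reach_mono HN).
have H1 : reachw N (avoid a x) 1 y k.
  rewrite (reach1 (@Hba x)) /avoid Hyx (eq_sym k x) Hxk andbT.
  by case/orP: Hyk => ->; rewrite ?orbT.
case/orP: Hkz => [/eqP <-|Hkz]; first exact: reach_S.
apply: (reach_step (@Hba x) H1).
by rewrite /avoid Hkz (eq_sym k x) Hxk Hzx.
Qed.

Lemma ecount1 k y z : essential N a k y z -> a y k -> a k z -> ecount N a y z = 1%N.
Proof.
move=> He Hyk Hkz.
have /andP[hy hk] := Hb Hyk.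
have /andP[_ hz] := Hb Hkz.
have [Hky Hkz' Hyz _ _] := ess_basic He.
have HN : (2 <= N)%N.
  move/eqP: Hyz => Hyz'; lia.
rewrite /ecount -(card1 (Ordinal hk)); apply: eq_card => x /=.
rewrite inE; apply/idP/idP => [Hx|/eqP ->] //.
apply/negPn/negP => Hne.
have Hxk : (x : nat) != k.
  apply: contra Hne => /eqP E; apply/eqP; apply: val_inj => /=; exact: E.
have [Hxy Hxz _ _ _] := ess_basic Hx.
move: Hx; apply/negP; apply: (ess_hub Hxk) => //; rewrite 1?eq_sym //.
- by rewrite Hyk orbT.
- by rewrite Hkz orbT.
Qed.

Lemma dist2 k y z : y != z -> ~~ a y z -> a y k -> a k z -> (2 <= N)%N ->
  dist N a y z = 2.
Proof.
move=> Hyz Hn Hyk Hkz HN.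
have H2 : reachw N a 2 y z := reach_step Hb (reach_step Hb (reach_refl _ _ _ _) Hyk) Hkz.
apply/eqP; rewrite eqn_leq (dist_le H2) /=.
apply: (dist_gt (d := 1)); first exact: reach_mono H2.
by rewrite (reach1 Hb) negb_or Hyz.
Qed.

End Ess.
Definition star N k : rel nat :=
  fun x y => [&& (x < N)%N, (y < N)%N, x != y & (x == k) || (y == k)].
Definition rmv (a : rel nat) i j : rel nat :=
  fun x y => a x y && ~~ (((x == i) && (y == j)) || ((x == j) && (y == i))).
Definition adl (a : rel nat) i j : rel nat :=
  fun x y => a x y || ((x == i) && (y == j)) || ((x == j) && (y == i)).

Lemma star_bound N k x y : star N k x y -> (x < N) && (y < N).
Proof. by case/and4P=> -> ->. Qed.

Lemma rmv_bound N (a : rel nat) i j :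
  (forall x y, a x y -> (x < N) && (y < N)) ->
  forall x y, rmv a i j x y -> (x < N) && (y < N).
Proof. by move=> Hb x y /andP[/Hb]. Qed.

Lemma adl_bound N (a : rel nat) i j : i < N -> j < N ->
  (forall x y, a x y -> (x < N) && (y < N)) ->
  forall x y, adl a i j x y -> (x < N) && (y < N).
Proof.
move=> Hi Hj Hb x y /orP[/orP[/Hb //|]|] /andP[/eqP-> /eqP->]; by rewrite ?Hi ?Hj.
Qed.

Lemma adj_sym n e x y : adj n e x y = adj n e y x.
Proof. by rewrite /adj eq_sym orbC; do 2 case: (_ < n). Qed.

Lemma adj_del n e i j : adj n (del_link e i j) = rmv (adj n e) i j.
Proof.
apply: functional_extensionality => x; apply: functional_extensionality => y.
rewrite /adj /rmv /del_link.
have -> : ((y == i) && (x == j)) || ((y == j) && (x == i)) =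
          ((x == i) && (y == j)) || ((x == j) && (y == i)).
  by rewrite orbC andbC (andbC (y == i)).
by case: (((x == i) && (y == j)) || ((x == j) && (y == i))); rewrite /= ?andbT ?andbF // ?orbF.
Qed.

Definition pp (i j x y : nat) := ((x == i) && (y == j)) || ((x == j) && (y == i)).

Lemma pp_sym i j x y : pp i j x y = pp i j y x.
Proof. by rewrite /pp orbC (andbC (x == j)) (andbC (x == i)). Qed.

Lemma pp_prop i j x y : i != j -> pp i j x y ->
  [/\ x != y, (x == i) || (x == j) & (y == i) || (y == j)].
Proof.
move=> Hij /orP[] /andP[/eqP-> /eqP->]; rewrite ?eqxx ?orbT //; split => //.
by rewrite eq_sym.
Qed.

Lemma adlE a i j x y : adl a i j x y = a x y || pp i j x y.
Proof. by rewrite /adl /pp orbA. Qed.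

Lemma add_linkE e i j x y : add_link e i j x y = e x y || pp i j x y.
Proof. by rewrite /add_link /pp orbA. Qed.

Lemma adj_add n e i j : i < n -> j < n -> i != j ->
  adj n (add_link e i j) = adl (adj n e) i j.
Proof.
move=> Hi Hj Hij.
apply: functional_extensionality => x; apply: functional_extensionality => y.
rewrite /adj adlE !add_linkE (pp_sym i j y x).
case Hp: (pp i j x y); last by rewrite !orbF.
have [Hxy Hx Hy] := pp_prop Hij Hp.
have Hxn : x < n by case/orP: Hx => /eqP->.
have Hyn : y < n by case/orP: Hy => /eqP->.
by rewrite Hxn Hyn Hxy !orbT.
Qed.

Lemma adj_entry n (e : rel nat) T : (forall x y, e x y -> (x < n) && (y < n)) -> T < n ->
  adj n.+1 (add_link e n T) = adl (adj n e) n T.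
Proof.
move=> Hb HT.
have HnT : n != T by rewrite neq_ltn HT orbT.
apply: functional_extensionality => x; apply: functional_extensionality => y.
rewrite /adj adlE !add_linkE (pp_sym n T y x).
case Hp: (pp n T x y); last first.
  rewrite !orbF; case Hxy: (e x y); case Hyx: (e y x); rewrite /= ?andbF //.
  - by have /andP[h1 h2] := Hb _ _ Hxy; rewrite h1 h2 !ltnS (ltnW h1) (ltnW h2).
  - by have /andP[h1 h2] := Hb _ _ Hxy; rewrite h1 h2 !ltnS (ltnW h1) (ltnW h2).
  - by have /andP[h1 h2] := Hb _ _ Hyx; rewrite h1 h2 !ltnS (ltnW h1) (ltnW h2).
have [Hxy Hx Hy] := pp_prop HnT Hp.
have Hxn : x < n.+1 by case/orP: Hx => /eqP->; rewrite // ltnS ltnW.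
have Hyn : y < n.+1 by case/orP: Hy => /eqP->; rewrite // ltnS ltnW.
by rewrite Hxn Hyn Hxy !orbT.
Qed.

Lemma star_entry n k : k < n -> adl (star n k) n k = star n.+1 k.
Proof.
move=> Hk.
have Hnk : (n == k) = false by apply/negbTE; rewrite neq_ltn Hk orbT.
apply: functional_extensionality => x; apply: functional_extensionality => y.
rewrite adlE /star /pp.
case: (eqVneq x n) => [->|Hx]; case: (eqVneq y n) => [->|Hy].
- by rewrite Hnk /= !andbF.
- by case: (eqVneq y k) => [->|_]; rewrite Hnk ltnn !ltnS leqnn ?(ltnW Hk) /= ?andbF ?orbF.
- by case: (eqVneq x k) => [->|_]; rewrite Hnk ltnn !ltnS leqnn ?(ltnW Hk) ?Hx /= ?andbF ?orbF ?andbT // neq_ltn Hk.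
- by rewrite /= !andbF !orbF !ltnS (leq_eqVlt x) (leq_eqVlt y) (negbTE Hx) (negbTE Hy).
Qed.

Lemma star2 k T : k < 2 -> T < 2 -> star 2 k = star 2 T.
Proof.
move=> Hk HT.
apply: functional_extensionality => x; apply: functional_extensionality => y.
rewrite /star; case Hx: (x < 2); case Hy: (y < 2) => //=.
case: eqVneq => //= Hxy.
have H t : t < 2 -> (x == t) || (y == t).
  move: Hx Hy Hxy; case: x => [|[|x]] //; case: y => [|[|y]] //;
  case: t => [|[|t]] //.
by rewrite (H k Hk) (H T HT).
Qed.

Lemma card_eq1 N x : x < N -> #|[pred w : 'I_N | (w : nat) == x]| = 1.
Proof.
move=> Hx; rewrite -(card1 (Ordinal Hx)); apply: eq_card => w.
by rewrite !inE.
Qed.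

Lemma card_eq2 N x y : x < N -> y < N -> x != y ->
  #|[pred w : 'I_N | ((w : nat) == x) || ((w : nat) == y)]| = 2.
Proof.
move=> Hx Hy Hxy.
have -> : #|[pred w : 'I_N | ((w : nat) == x) || ((w : nat) == y)]| =
          #|pred2 (Ordinal Hx) (Ordinal Hy)|.
  by apply: eq_card => w; rewrite !inE.
by rewrite card2 -(inj_eq val_inj) /= Hxy.
Qed.

Lemma card_ne1 N x : x < N -> #|[pred w : 'I_N | (w : nat) != x]| = (N - 1)%N.
Proof.
move=> Hx; have := cardC1 (Ordinal Hx); rewrite card_ord subn1 => <-.
by apply: eq_card => w; rewrite !inE.
Qed.

Lemma card_ne2 N x y : x < N -> y < N -> x != y ->
  #|[pred w : 'I_N | ((w : nat) != x) && ((w : nat) != y)]| = (N - 2)%N.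
Proof.
move=> Hx Hy Hxy.
have := cardD1 (Ordinal Hx) [pred w : 'I_N | (w : nat) != y].
rewrite card_ne1 // !inE /= Hxy.
have -> : #|[predD1 [pred w : 'I_N | (w : nat) != y] & Ordinal Hx]| =
          #|[pred w : 'I_N | ((w : nat) != x) && ((w : nat) != y)]|.
  by apply: eq_card => w; rewrite !inE.
move=> E; rewrite /= in E; lia.
Qed.
Local Open Scope ring_scope.

Section Util.
Variable R : realFieldType.
Variables (b : nat -> R) (c gam : R).
Hypothesis hbdec : forall i : nat, (0 < i)%N -> b i.+1 < b i.
Hypothesis hbpos : forall i : nat, (0 < i)%N -> 0 < b i.
Hypothesis hg0 : 0 <= gam.
Hypothesis hg1 : gam < 1.

Definition Fv N (a : rel nat) j w : R :=
  (if connected N a j w && (1 < dist N a j w)%N then b (dist N a j w) else 0)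
  - (if [exists x : 'I_N, essential N a x j w] then gam * b (dist N a j w) else 0).

Definition Gv N (a : rel nat) j y z : R :=
  if (y < z)%N && essential N a j y z then
    gam / (ecount N a y z)%:R * 2 * b (dist N a y z) else 0.

Definition U N (a : rel nat) j : R :=
  (#|[pred w : 'I_N | a j w]|)%:R * (b 1%N - c)
  + \sum_(w < N) Fv N a j w + \sum_(y < N) \sum_(z < N) Gv N a j y z.

Lemma utilityE N e j : utility b c gam N e j = U N (adj N e) j.
Proof.
rewrite /utility /U /Fv /Gv; congr (_ + _).
rewrite -addrA; congr (_ + _).
rewrite [X in _ - X]big_mkcond [X in X - _]big_mkcond /= -sumrB.
by apply: eq_bigr => w _.
apply: eq_bigr => y _; rewrite big_mkcond /=; apply: eq_bigr => z _.
by [].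
Qed.

Lemma bmono d d' : (0 < d)%N -> (d <= d')%N -> b d' <= b d.
Proof.
move=> Hd /subnK <-; elim: (d' - d)%N => [|k IH] /=; first by rewrite add0n lexx.
rewrite addSn; apply: le_trans IH; apply/ltW/hbdec.
by rewrite addn_gt0 Hd orbT.
Qed.

Section G.
Variable N : nat.
Variable a : rel nat.
Hypothesis Hb : forall x y, a x y -> ((x < N) && (y < N))%N.

Lemma Fv_ge0 j w : 0 <= Fv N a j w.
Proof.
rewrite /Fv; case: ifP => [/andP[_ Hd]|Hn].
  have hb := hbpos (ltnW Hd).
  case: ifP => _; last by rewrite subr0 ltW.
  rewrite -{1}(mul1r (b _)) -mulrBl; apply: mulr_ge0; [by rewrite subr_ge0 ltW | exact: ltW].
case: ifP => [/existsP[x Hx]|_]; last by rewrite subr0.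
have [_ _ _ Hc _] := ess_basic Hb Hx.
by move: Hn; rewrite Hc (ess_dist Hb Hx).
Qed.

Lemma Fv_adj j w : (j == w) || a j w -> Fv N a j w = 0.
Proof.
move=> H; have H1 : reachw N a 1 j w by rewrite (reach1 Hb).
have Hd := dist_le H1.
rewrite /Fv ifF; last by apply/negbTE; rewrite negb_and ltnNge Hd orbT.
rewrite ifF ?subr0 //; apply/negbTE/existsP => [[x Hx]].
by move: (ess_dist Hb Hx); rewrite ltnNge Hd.
Qed.

Lemma Fv_disc j w : ~~ connected N a j w -> Fv N a j w = 0.
Proof.
move=> H; rewrite /Fv ifF; last by rewrite (negbTE H).
rewrite ifF ?subr0 //; apply/negbTE/existsP => [[x Hx]].
have [_ _ _ Hc _] := ess_basic Hb Hx.
by move: H; rewrite Hc.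
Qed.

Lemma Fv_le d j w : (1 < d)%N ->
  (connected N a j w -> [exists x : 'I_N, essential N a x j w] && ~~ reachw N a d.-1 j w) ->
  Fv N a j w <= (1 - gam) * b d.
Proof.
move=> Hd H.
have hbd : 0 < b d by apply: hbpos; apply: ltnW.
have hg : 0 <= 1 - gam by rewrite subr_ge0 ltW.
case: (boolP (connected N a j w)) => Hc; last first.
  by rewrite Fv_disc // mulr_ge0 // ltW.
have /andP[He Hr] := H Hc.
have Hdd : (d <= dist N a j w)%N.
  by have := dist_gt Hc Hr; case: d Hd {H Hr hbd}.
rewrite /Fv Hc He (leq_trans Hd Hdd) /=.
rewrite -{1}(mul1r (b _)) -mulrBl; apply: ler_wpM2l => //.
apply: bmono => //; exact: ltnW.
Qed.

Lemma Fv_eq2 j w : (2 <= N)%N -> reachw N a 2 j w -> j != w -> ~~ a j w ->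
  [exists x : 'I_N, essential N a x j w] -> Fv N a j w = (1 - gam) * b 2.
Proof.
move=> HN H2 Hjw Hn He.
have Hc : connected N a j w := reach_mono HN H2.
have Hd : dist N a j w = 2%N.
  apply/eqP; rewrite eqn_leq (dist_le H2) /=; apply: (dist_gt (d := 1)) => //.
  by rewrite (reach1 Hb) negb_or Hjw.
by rewrite /Fv Hc He Hd /= mulrBl mul1r.
Qed.

Lemma Gv_ge0 j y z : 0 <= Gv N a j y z.
Proof.
rewrite /Gv; case: ifP => [/andP[_ He]|_] //.
have Hd := ess_dist Hb He.
apply: mulr_ge0; last by apply/ltW/hbpos/ltnW.
by apply: mulr_ge0 => //; apply: mulr_ge0 => //; rewrite invr_ge0.
Qed.

Lemma Gv_zero j y z : ~~ essential N a j y z -> Gv N a j y z = 0.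
Proof. by move=> H; rewrite /Gv (negbTE H) andbF. Qed.

Lemma Gv_eq j y z : (2 <= N)%N -> essential N a j y z -> a y j -> a j z -> (y < z)%N ->
  Gv N a j y z = gam * 2 * b 2.
Proof.
move=> HN He Hyj Hjz Hyz.
have [_ _ Hyz' _ Hn] := ess_basic Hb He.
by rewrite /Gv Hyz He (ecount1 Hb He Hyj Hjz) (dist2 Hb Hyz' Hn Hyj Hjz HN) divr1.
Qed.

Lemma U_ge0 j : c < b 1%N -> 0 <= U N a j.
Proof.
move=> hc; rewrite /U; apply: addr_ge0; first apply: addr_ge0.
- by apply: mulr_ge0; rewrite ?ler0n // subr_ge0 ltW.
- by apply: sumr_ge0 => w _; exact: Fv_ge0.
- by apply: sumr_ge0 => y _; apply: sumr_ge0 => z _; exact: Gv_ge0.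
Qed.

End G.
Lemma star_boundS N k x y : star N k x y -> ((x < N) && (y < N))%N.
Proof. exact: star_bound. Qed.

Lemma two_le N x y : (x < N)%N -> (y < N)%N -> x != y -> (2 <= N)%N.
Proof. by move=> Hx Hy /eqP Hxy; lia. Qed.

Lemma star_in N k x y : (x < N)%N -> (y < N)%N -> x != y -> (x == k) || (y == k) ->
  star N k x y.
Proof. by move=> Hx Hy Hxy Hk; rewrite /star Hx Hy Hxy Hk. Qed.

Lemma star_leaf N k x y : x != k -> star N k x y -> y == k.
Proof. by move=> Hxk /and4P[_ _ _]; rewrite (negbTE Hxk). Qed.

Lemma Fstar N k j w : (k < N)%N -> (j < N)%N -> (w < N)%N ->
  Fv N (star N k) j w = if [&& j != k, w != k & w != j] then (1 - gam) * b 2 else 0.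
Proof.
move=> Hk Hj Hw; have Sb := @star_bound N k.
case: ifP => [/and3P[Hjk Hwk Hwj]|Hn].
  have HN := two_le Hj Hk Hjk.
  have Sjk : star N k j k by apply: star_in; rewrite ?eqxx ?orbT.
  have Skw : star N k k w by apply: star_in; rewrite ?eqxx // eq_sym.
  have H2 : reachw N (star N k) 2 j w := reach_step Sb (reach_step Sb (reach_refl _ _ _ _) Sjk) Skw.
  apply: (Fv_eq2 Sb HN H2); first by rewrite eq_sym.
    by rewrite /star (negbTE Hjk) (negbTE Hwk) !andbF.
  apply/existsP; exists (Ordinal Hk) => /=.
  apply: ess_only => //; rewrite 1?eq_sym //.
    exact: reach_mono HN H2.
  by move=> w'; apply: star_leaf.
apply: (Fv_adj Sb); move: Hn.
case: (eqVneq w j) => [->|Hwj] /=; first by [].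
case: (eqVneq j k) => [Ejk|Hjk] /=.
  by subst j => _; apply: star_in; rewrite // ?eqxx // eq_sym.
case: (eqVneq w k) => [->|Hwk] //= _.
by apply: star_in; rewrite ?eqxx ?orbT // eq_sym.
Qed.

Lemma Gstar N k y z : (k < N)%N -> (y < N)%N -> (z < N)%N ->
  Gv N (star N k) k y z = if [&& (y < z)%N, y != k & z != k] then gam * 2 * b 2 else 0.
Proof.
move=> Hk Hy Hz; have Sb := @star_bound N k.
case: ifP => [/and3P[Hyz Hyk Hzk]|Hn].
  have Hyz' : y != z by rewrite neq_ltn Hyz.
  have HN := two_le Hy Hk Hyk.
  have Syk : star N k y k by apply: star_in; rewrite ?eqxx ?orbT.
  have Skz : star N k k z by apply: star_in; rewrite ?eqxx // eq_sym.
  have H2 : reachw N (star N k) 2 y z := reach_step Sb (reach_step Sb (reach_refl _ _ _ _) Syk) Skz.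
  apply: (Gv_eq Sb HN) => //.
  apply: ess_only => //; rewrite 1?eq_sym //.
    exact: reach_mono HN H2.
  by move=> w'; apply: star_leaf.
rewrite /Gv; case: ifP => // /andP[Hyz He]; move: Hn; rewrite Hyz /=.
by case/and5P: He => _ Hky Hkz _ _; rewrite eq_sym Hky eq_sym Hkz.
Qed.

Lemma Gleaf N k j y z : (k < N)%N -> (j < N)%N -> (y < N)%N -> (z < N)%N -> j != k ->
  Gv N (star N k) j y z = 0.
Proof.
move=> Hk Hj Hy Hz Hjk; have Sb := @star_bound N k.
apply: Gv_zero.
case: (eqVneq j y) => [<-|Hjy]; first by rewrite /essential eqxx !andbF.
case: (eqVneq j z) => [<-|Hjz]; first by rewrite /essential eqxx !andbF.
apply: (ess_hub Sb Hjk); rewrite 1?eq_sym //.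
- by case: (eqVneq y k) => //= Hyk; apply: star_in; rewrite ?eqxx ?orbT.
- by case: (eqVneq k z) => //= Hkz; apply: star_in; rewrite ?eqxx.
- exact: two_le Hj Hk Hjk.
Qed.

Lemma deg_center N k : (k < N)%N -> #|[pred w : 'I_N | star N k k w]| = (N - 1)%N.
Proof.
move=> Hk; rewrite -(card_ne1 Hk); apply: eq_card => w; rewrite !inE /star Hk ltn_ord eqxx /=.
by rewrite andbT eq_sym.
Qed.

Lemma deg_leaf N k j : (k < N)%N -> (j < N)%N -> j != k ->
  #|[pred w : 'I_N | star N k j w]| = 1%N.
Proof.
move=> Hk Hj Hjk; rewrite -(card_eq1 Hk); apply: eq_card => w; rewrite !inE /star Hj ltn_ord /=.
rewrite (negbTE Hjk) /=; case: (eqVneq (w : nat) k) => [->|_]; [by rewrite andbT | by rewrite andbF].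
Qed.

Lemma sum_if_pred N (P : pred nat) (C : R) :
  \sum_(w < N) (if P w then C else 0) = (#|[pred w : 'I_N | P w]|)%:R * C.
Proof. by rewrite -big_mkcond /= sumr_const mulr_natl. Qed.

Lemma U_center N k : (k < N)%N -> U N (star N k) k =
  (N - 1)%:R * (b 1 - c) +
  \sum_(y < N) \sum_(z < N) (if [&& (y < z)%N, (y : nat) != k & (z : nat) != k] then gam * 2 * b 2 else 0).
Proof.
move=> Hk; rewrite /U deg_center // big1 ?addr0; last first.
  by move=> w _; rewrite Fstar // eqxx.
congr (_ + _); apply: eq_bigr => y _; apply: eq_bigr => z _; exact: Gstar.
Qed.

Lemma sumF_leaf N k j : (k < N)%N -> (j < N)%N -> j != k ->
  \sum_(w < N) Fv N (star N k) j w = (N - 2)%:R * ((1 - gam) * b 2).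
Proof.
move=> Hk Hj Hjk.
under eq_bigr => w _ do rewrite Fstar // Hjk /=.
by rewrite (sum_if_pred N (fun w : nat => (w != k) && (w != j))) card_ne2 // eq_sym.
Qed.

Lemma U_leaf N k j : (k < N)%N -> (j < N)%N -> j != k ->
  U N (star N k) j = (b 1 - c) + (N - 2)%:R * ((1 - gam) * b 2).
Proof.
move=> Hk Hj Hjk; rewrite /U deg_leaf // mul1r.
rewrite [X in _ + _ + X]big1 ?addr0; last first.
  by move=> y _; apply: big1 => z _; apply: Gleaf.
by rewrite sumF_leaf.
Qed.


Lemma reach_succ N a m y z : reachw N a m.+1 y z =
  reachw N a m y z || [exists w : 'I_N, reachw N a m y w && a w z].
Proof. by []. Qed.

Lemma delA N k i : c < b 1 -> (k < N)%N -> (i < N)%N -> i != k ->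
  U N (rmv (star N k) i k) i <= U N (star N k) i.
Proof.
move=> hc Hk Hi Hik.
have Sb := @star_bound N k.
set a' := rmv (star N k) i k.
have Hb' : forall x y, a' x y -> ((x < N) && (y < N))%N := rmv_bound Sb.
have iso1 : forall w, a' i w = false.
  move=> w; rewrite /a' /rmv; case H: (star N k i w) => //=.
  by rewrite (eqP (star_leaf Hik H)) !eqxx.
have iso2 : forall w, a' w i = false.
  move=> w; rewrite /a' /rmv; case H: (star N k w i) => //=.
  have : w == k by move: H => /and4P[_ _ _]; rewrite (negbTE Hik) orbF.
  by move/eqP->; rewrite !eqxx orbT.
have Ua : U N a' i = 0.
  rewrite /U.
  have -> : #|[pred w : 'I_N | a' i w]| = 0%N by apply: eq_card0 => w; rewrite !inE iso1.
  rewrite mul0r add0r big1; last first.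
    move=> w _; case: (eqVneq (w : nat) i) => [Ew|Hw].
      by apply: (Fv_adj Hb'); rewrite Ew eqxx.
    apply: (Fv_disc Hb'); apply/negP => Hc.
    have : pred1 i (w : nat).
      apply: (reach_closed (P := pred1 i) _ _ Hc) => //= w' z' /eqP -> .
      by rewrite iso1.
    by rewrite /= (negbTE Hw).
  rewrite add0r big1 // => y _; rewrite big1 // => z _; apply: Gv_zero.
  have Hav : avoid a' i = a'.
    apply: functional_extensionality => u; apply: functional_extensionality => v.
    rewrite /avoid; case H: (a' u v) => //=.
    apply/andP; split; apply/negP => /eqP E; subst; by rewrite ?iso1 ?iso2 in H.
  by rewrite /essential Hav; case: (connected _ _ _ _); rewrite !andbF.
by rewrite Ua; apply: U_ge0.
Qed.

Lemma delB N k l : c < b 1 -> (k < N)%N -> (l < N)%N -> l != k ->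
  U N (rmv (star N k) k l) k <= U N (star N k) k.
Proof.
move=> hc Hk Hl Hlk.
have Sb := @star_bound N k.
set a' := rmv (star N k) k l.
have Hb' : forall x y, a' x y -> ((x < N) && (y < N))%N := rmv_bound Sb.
have HN := two_le Hl Hk Hlk.
have isoL1 : forall v, a' l v = false.
  move=> v; rewrite /a' /rmv; case H: (star N k l v) => //=.
  by rewrite (eqP (star_leaf Hlk H)) !eqxx orbT.
have isoL2 : forall u, a' u l = false.
  move=> u; rewrite /a' /rmv; case H: (star N k u l) => //=.
  have : u == k by move: H => /and4P[_ _ _]; rewrite (negbTE Hlk) orbF.
  by move/eqP->; rewrite !eqxx.
have ak : forall w, (w < N)%N -> w != k -> w != l -> a' k w.
  move=> w Hw Hwk Hwl; rewrite /a' /rmv /pp (negbTE Hwl) eqxx /=.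
  by rewrite (negbTE Hwk) andbF andbT; apply: star_in; rewrite ?eqxx // eq_sym.
have ak' : forall w, (w < N)%N -> w != k -> w != l -> a' w k.
  move=> w Hw Hwk Hwl; rewrite /a' /rmv /pp (negbTE Hwk) eqxx /= (negbTE Hwl) /=.
  by rewrite andbT; apply: star_in; rewrite ?eqxx ?orbT.
have notL : forall m y z, y != l -> reachw N a' m y z -> z != l.
  move=> m y z Hy H; apply: (reach_closed (P := fun u => u != l) Hy _ H).
  by move=> w z' _; apply: contraTN => /eqP ->; rewrite isoL2.
have fromL : forall m z, reachw N a' m l z -> z == l.
  move=> m z H; apply: (reach_closed (P := pred1 l) _ _ H) => //= w z' /eqP ->.
  by rewrite isoL1.
rewrite /U; apply: lerD; first apply: lerD.
- apply: ler_wpM2r; first by rewrite subr_ge0 ltW.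
  rewrite ler_nat; apply: subset_leq_card; apply/subsetP => w; rewrite !inE.
  by case/andP.
- apply: ler_sum => w _.
  have -> : Fv N a' k w = 0.
    case: (eqVneq (w : nat) k) => [Ew|Hwk].
      by apply: (Fv_adj Hb'); rewrite Ew eqxx.
    case: (eqVneq (w : nat) l) => [Ew|Hwl].
      apply: (Fv_disc Hb'); apply/negP => Hc.
      have Hkl : k != l by rewrite eq_sym.
      by move: (notL _ _ _ Hkl Hc); rewrite Ew eqxx.
    by apply: (Fv_adj Hb'); rewrite (ak _ (ltn_ord w) Hwk Hwl) orbT.
  exact: Fv_ge0.
- apply: ler_sum => y _; apply: ler_sum => z _.
  case: (boolP (essential N a' k y z)) => He; last by rewrite Gv_zero // (Gv_ge0 Sb).
  case: (boolP (y < z)%N) => Hyz; last by rewrite {1}/Gv (negbTE Hyz) /= (Gv_ge0 Sb).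
  have [Hky Hkz Hyz' Hc _] := ess_basic Hb' He.
  have Hyl : (y : nat) != l.
    apply/eqP => E; move: (Hc); rewrite /connected E => /fromL /eqP E'.
    by move: Hyz'; rewrite E E' eqxx.
  have Hzl : (z : nat) != l := notL _ _ _ Hyl Hc.
  rewrite (Gv_eq Hb' HN He (ak' _ (ltn_ord y) _ Hyl) (ak _ (ltn_ord z) _ Hzl) Hyz) ?(eq_sym _ k) //.
  by rewrite Gstar // Hyz eq_sym Hky eq_sym Hkz.
Qed.

Lemma sum_if_eq N x (C : R) : (x < N)%N ->
  \sum_(w < N) (if (w : nat) == x then C else 0) = C.
Proof.
move=> Hx; rewrite (sum_if_pred N (fun w : nat => w == x)).
by rewrite card_eq1 // mul1r.
Qed.

Lemma addC N k i j : b 1 - b 2 + gam * b 2 <= c ->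
  (k < N)%N -> (i < N)%N -> (j < N)%N -> i != k -> j != k -> i != j ->
  U N (adl (star N k) i j) i <= U N (star N k) i.
Proof.
move=> hc Hk Hi Hj Hik Hjk Hij.
have Sb := @star_bound N k.
set a' := adl (star N k) i j.
have Hb' : forall x y, a' x y -> ((x < N) && (y < N))%N := adl_bound Hi Hj Sb.
have HN := two_le Hi Hk Hik.
have a'iw : forall w, (w < N)%N -> a' i w = (w == k) || (w == j).
  move=> w Hw; rewrite /a' adlE /pp eqxx /= (negbTE Hij) /= orbF.
  rewrite /star Hi Hw (negbTE Hik) /=.
  by case: (eqVneq w k) => [->|_] //=; rewrite ?Hik ?andbF.
set C := (1 - gam) * b 2.
have hC : 0 <= C by rewrite mulr_ge0 // ?subr_ge0 ?ltW // hbpos.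
have pw : forall w : 'I_N, Fv N a' i w + (if (w : nat) == j then C else 0) <= Fv N (star N k) i w.
  move=> w; have Hw := ltn_ord w.
  case: (eqVneq (w : nat) j) => [Ew|Hwj].
    rewrite Ew (Fv_adj Hb'); last by rewrite a'iw // eqxx !orbT.
    by rewrite Fstar // Hik Hjk eq_sym Hij add0r /= lexx.
  rewrite addr0.
  case: (eqVneq (w : nat) i) => [Ew|Hwi].
    by rewrite (Fv_adj Hb') ?Ew ?eqxx // (Fv_ge0 Sb).
  case: (eqVneq (w : nat) k) => [Ew|Hwk].
    by rewrite (Fv_adj Hb') ?a'iw ?Ew ?eqxx ?orbT // (Fv_ge0 Sb).
  rewrite Fstar // ifT; last by apply/and3P; split.
  apply: (Fv_le Hb') => // Hc; apply/andP; split; last first.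
    by rewrite (reach1 Hb') a'iw // !negb_or eq_sym Hwi Hwk Hwj.
  apply/existsP; exists (Ordinal Hk); rewrite /essential /= Hk eq_sym Hik eq_sym Hwk Hc /=.
  apply/negP => H.
  have : ((w : nat) == i) || ((w : nat) == j).
    apply: (reach_closed (P := fun u => (u == i) || (u == j)) _ _ H); first by rewrite eqxx.
    move=> u v Hu /and3P[Ha Hu' Hv]; move: Ha; rewrite /a' adlE => /orP[Hs|Hp].
      have Hvk : v == k by apply: star_leaf Hs; case/orP: Hu => /eqP ->.
      by move: Hv; rewrite Hvk.
    by have [_ _ ->] := pp_prop Hij Hp.
  by rewrite (negbTE Hwi) (negbTE Hwj).
have HS : \sum_(w < N) (Fv N a' i w + (if (w : nat) == j then C else 0)) <=
          \sum_(w < N) Fv N (star N k) i w by apply: ler_sum => w _; exact: pw.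
rewrite big_split /= sum_if_eq // sumF_leaf // in HS.
rewrite U_leaf // /U.
have -> : #|[pred w : 'I_N | a' i w]| = 2%N.
  rewrite -(card_eq2 Hk Hj); last by rewrite eq_sym.
  by apply: eq_card => w; rewrite !inE a'iw.
rewrite [X in _ + _ + X]big1 ?addr0; last first.
  move=> y _; apply: big1 => z _; apply: Gv_zero.
  case: (eqVneq i y) => [<-|Hiy]; first by rewrite /essential eqxx !andbF.
  case: (eqVneq i z) => [<-|Hiz]; first by rewrite /essential eqxx !andbF.
  apply: (ess_hub Hb' Hik); rewrite 1?eq_sym //.
  - case: (eqVneq (y : nat) k) => //= Hyk; rewrite /a' adlE; apply/orP; left.
    by apply: star_in; rewrite ?eqxx ?orbT.
  - case: (eqVneq k (z : nat)) => //= Hkz; rewrite /a' adlE; apply/orP; left.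
    by apply: star_in; rewrite ?eqxx.
have hc' : b 1 - c <= C by rewrite /C mulrBl mul1r; lra.
rewrite -/C in HS *.
set S := \sum_(w < N) Fv N a' i w in HS *.
lra.
Qed.
Lemma sum_ext2 n (g : nat -> nat -> R) : (forall y z, 0 <= g y z) ->
  \sum_(y < n) \sum_(z < n) g y z <= \sum_(y < n.+1) \sum_(z < n.+1) g y z.
Proof.
move=> Hg; rewrite big_ord_recr /= -[X in X <= _]addr0; apply: lerD; last first.
  by apply: sumr_ge0 => z _.
apply: ler_sum => y _; rewrite big_ord_recr /= -[X in X <= _]addr0.
by apply: lerD => //; apply: ler_sum => z _.
Qed.

Lemma acceptK n k : c < b 1 -> (k < n)%N ->
  U n (star n k) k <= U n.+1 (star n.+1 k) k.
Proof.
move=> hc Hk; rewrite !U_center //; last exact: ltnW.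
apply: lerD.
  apply: ler_wpM2r; first by rewrite subr_ge0 ltW.
  by rewrite ler_nat; lia.
apply: (@sum_ext2 n (fun y z : nat =>
  if [&& (y < z)%N, y != k & z != k] then gam * 2 * b 2 else 0)) => y z.
case: ifP => // _; apply: mulr_ge0; last exact/ltW/hbpos.
by apply: mulr_ge0.
Qed.

Lemma Ul_bound n k l : (k < n)%N -> (l < n)%N -> l != k ->
  U n.+1 (adl (star n k) n l) n <=
  (b 1 - c) + ((n.+1 - 2)%:R * ((1 - gam) * b 3) + (1 - gam) * (b 2 - b 3)).
Proof.
move=> Hk Hl Hlk.
have Sb : forall x y, star n k x y -> ((x < n.+1) && (y < n.+1))%N.
  by move=> x y /star_bound /andP[h1 h2]; rewrite !ltnS (ltnW h1) (ltnW h2).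
set a2 := adl (star n k) n l.
have Hb2 : forall x y, a2 x y -> ((x < n.+1) && (y < n.+1))%N.
  by apply: adl_bound => //; apply: ltnW.
have Hnl : n != l by rewrite neq_ltn Hl orbT.
have Hl1 : (l < n.+1)%N := ltnW Hl.
have Hk1 : (k < n.+1)%N := ltnW Hk.
have Hnk : n != k by rewrite neq_ltn Hk orbT.
have a2n : forall w, a2 n w = (w == l).
  move=> w; rewrite /a2 adlE /star ltnn /= /pp eqxx /=.
  have -> : (n == l) = false by apply/negbTE.
  by rewrite orbF.
have a2l : forall w, a2 l w -> (w == k) || (w == n).
  move=> w; rewrite /a2 adlE /pp => /orP[/and4P[_ _ _]|].
    by rewrite (negbTE Hlk) /= => ->.
  rewrite eqxx /= => /orP[/andP[/eqP E _]|->]; last by rewrite orbT.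
  by move: Hnl; rewrite E eqxx.
have hg : 0 < 1 - gam by rewrite subr_gt0.
have hb3 : 0 < b 3 by apply: hbpos.
have hb23 : 0 < b 2 - b 3 by rewrite subr_gt0; apply: hbdec.
set h := fun w : nat => (if (w != n) && (w != l) then (1 - gam) * b 3 else 0) +
                        (if w == k then (1 - gam) * (b 2 - b 3) else 0).
have h0 : forall w, 0 <= h w.
  move=> w; rewrite /h; apply: addr_ge0; case: ifP => // _; apply: mulr_ge0; exact: ltW.
have pw : forall w : 'I_n.+1, Fv n.+1 a2 n w <= h w.
  move=> w; have Hw := ltn_ord w.
  case: (eqVneq (w : nat) n) => [Ew|Hwn].
    by rewrite (Fv_adj Hb2) ?Ew ?eqxx.
  case: (eqVneq (w : nat) l) => [Ew|Hwl].
    by rewrite (Fv_adj Hb2) ?a2n ?Ew ?eqxx ?orbT.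
  have Hwn' : (w < n)%N by rewrite ltn_neqAle Hwn -ltnS.
  have Hess : connected n.+1 a2 n w -> [exists x : 'I_n.+1, essential n.+1 a2 x n w].
    move=> Hc; apply/existsP; exists (Ordinal Hl1).
    apply: ess_only => //=; rewrite 1?eq_sym //; last by move=> w'; rewrite a2n.
  case: (eqVneq (w : nat) k) => [Ew|Hwk].
    have -> : h w = (1 - gam) * b 2.
      by rewrite /h Ew eqxx (eq_sym k n) Hnk (eq_sym k l) Hlk /=; ring.
    apply: (Fv_le Hb2) => // Hc; rewrite Hess //.
    by rewrite (reach1 Hb2) a2n negb_or eq_sym Hwn Hwl.
  have -> : h w = (1 - gam) * b 3.
    by rewrite /h Hwn Hwl (negbTE Hwk) /= addr0.
  apply: (Fv_le Hb2) => // Hc; rewrite Hess //.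
  rewrite reach_succ (reach1 Hb2) a2n !negb_or (eq_sym n) Hwn Hwl !andTb.
  apply/existsP => [[u /andP[Hu Huw]]].
  move: Hu; rewrite (reach1 Hb2) a2n => /orP[/eqP Eu|/eqP Eu].
    by move: Huw; rewrite -Eu a2n (negbTE Hwl).
  by move: Huw; rewrite Eu => /a2l; rewrite (negbTE Hwk) (negbTE Hwn).
rewrite /U.
have -> : #|[pred w : 'I_n.+1 | a2 n w]| = 1%N.
  rewrite -(card_eq1 (ltnW Hl : (l < n.+1)%N)).
  by apply: eq_card => w; rewrite !inE a2n.
rewrite mul1r -addrA; apply: lerD => //.
rewrite [X in _ + X]big1 ?addr0; last first.
  move=> y _; apply: big1 => z _; apply: Gv_zero.
  case: (eqVneq n y) => [<-|Hny]; first by rewrite /essential eqxx !andbF.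
  case: (eqVneq n z) => [<-|Hnz]; first by rewrite /essential eqxx !andbF.
  have HN : (2 <= n.+1)%N by lia.
  apply: (ess_hub Hb2 Hnk); rewrite 1?eq_sym //.
  - case: (eqVneq (y : nat) k) => //= Hyk; rewrite /a2 adlE; apply/orP; left.
    apply: star_in; rewrite ?eqxx ?orbT //.
    by rewrite ltn_neqAle eq_sym Hny /= -ltnS.
  - case: (eqVneq k (z : nat)) => //= Hkz; rewrite /a2 adlE; apply/orP; left.
    apply: star_in; rewrite ?eqxx //.
    by rewrite ltn_neqAle eq_sym Hnz /= -ltnS.
apply: le_trans (ler_sum _ (fun w _ => pw w)) _.
rewrite /h big_split /=.
rewrite (sum_if_pred n.+1 (fun w : nat => (w != n) && (w != l))) card_ne2 ?ltnSn //.
by rewrite sum_if_eq ?lexx.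
Qed.

Lemma entry_cmp n k l c0 : (3 <= n)%N -> (k < n)%N -> (l < n)%N -> l != k ->
  c0 < (1 - gam) * (b 2 - b 3) ->
  U n.+1 (adl (star n k) n l) n - c0 * 1%:R <
  U n.+1 (star n.+1 k) n - c0 * (n - 1)%:R.
Proof.
move=> Hn Hk Hl Hlk hc0.
have Hnk : n != k by rewrite neq_ltn Hk orbT.
rewrite U_leaf //; last exact: ltnW.
apply: (le_lt_trans (lerD (Ul_bound Hk Hl Hlk) (lexx (- (c0 * 1%:R))))).
have E1 : (n.+1 - 2)%N = ((n - 2) + 1)%N by lia.
have E2 : (n - 1)%N = ((n - 2) + 1)%N by lia.
rewrite E1 E2 !natrD.
set m := (n - 2)%:R.
have hm : 0 < m by rewrite ltr0n; lia.
rewrite -subr_gt0.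
have -> : b 1 - c + (m + 1%:R) * ((1 - gam) * b 2) - c0 * (m + 1%:R) -
  (b 1 - c + ((m + 1%:R) * ((1 - gam) * b 3) + (1 - gam) * (b 2 - b 3)) - c0 * 1%:R) =
  m * ((1 - gam) * (b 2 - b 3) - c0) by ring.
by apply: mulr_gt0 => //; rewrite subr_gt0.
Qed.

End Util.
Lemma main_inv (R : realFieldType) (b : nat -> R) (c gam c0 : R)
  (hbdec : forall i : nat, (0 < i)%N -> b i.+1 < b i)
  (hbpos : forall i : nat, (0 < i)%N -> 0 < b i)
  (hg0 : 0 <= gam) (hg1 : gam < 1)
  (hc1 : b 1%N - b 2%N + gam * b 2%N <= c) (hc2 : c < b 1%N)
  (hc0 : c0 < (1 - gam) * (b 2%N - b 3%N)) :
  forall n e, reachable b c gam c0 n e ->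
  (forall x y, e x y -> ((x < n) && (y < n))%N) /\
  exists2 k, (k < n)%N & adj n e = star n k.
Proof.
move=> n0 e0; elim => [|n e T Hr [Hbd [k Hk Hadj]] _ HT Hacc Hval Hmax
         |n e i e' Hr [Hbd [k Hk Hadj]] Hi Hopt Himp _].
- split => //; exists 0%N => //.
  apply: functional_extensionality => x; apply: functional_extensionality => y.
  by rewrite /adj /star; case: x => [|x]; case: y => [|y].
- split.
    move=> x y; rewrite add_linkE => /orP[/Hbd/andP[h1 h2]|].
      by rewrite !ltnS (ltnW h1) (ltnW h2).
    by rewrite /pp => /orP[] /andP[/eqP-> /eqP->]; rewrite !ltnS leqnn (ltnW HT).
  rewrite adj_entry // Hadj.
  case: (eqVneq T k) => [ET|HTk].
    by subst T; exists k; [exact: ltnW | exact: star_entry].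
  case: (leqP n 2) => Hn2.
    have En : n = 2%N by move/eqP: HTk => ?; lia.
    subst n; exists T; first exact: ltnW.
    by rewrite (star2 Hk HT) star_entry.
  exfalso.
  have Hacck : entry_accepts b c gam n e k.
    rewrite /entry_accepts !utilityE adj_entry // Hadj star_entry //.
    exact: acceptK.
  have := Hmax k Hk Hacck.
  rewrite /entry_value !utilityE !adj_entry // Hadj star_entry // /deg Hadj.
  rewrite deg_center // deg_leaf // => H.
  have := entry_cmp c hbdec hbpos hg0 hg1 Hn2 Hk HT HTk hc0.
  by rewrite ltNge H.
- exfalso; move: Himp; apply/negP; rewrite -leNgt.
  case: Hopt => [[j [Hij Ee']]|[j [Hj Hji Hnadj Hacc Ee']]]; subst e'; rewrite !utilityE.
    rewrite adj_del Hadj; rewrite Hadj in Hij.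
    have /and4P[Hi' Hj' Hij' Hor] := Hij.
    case: (eqVneq i k) => [Eik|Hik].
      subst i; apply: delB => //; by rewrite eq_sym.
    have Ejk := eqP (star_leaf Hik Hij); subst j.
    exact: delA.
  have Hij : i != j by rewrite eq_sym.
  rewrite adj_add // Hadj; rewrite Hadj in Hnadj.
  have Hik : i != k.
    apply: contraNneq Hnadj => Eik; subst i.
    by apply: star_in; rewrite ?eqxx.
  have Hjk : j != k.
    apply: contraNneq Hnadj => Ejk; subst j.
    by apply: star_in; rewrite ?eqxx ?orbT.
  exact: addC.
Qed.

Unset Implicit Arguments.

Theorem theorem1 (R : realFieldType) (b : nat -> R) (c gam c0 : R)
  (hbdec : forall i : nat, (0 < i)%N -> b i.+1 < b i)
  (hbpos : forall i : nat, (0 < i)%N -> 0 < b i)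
  (hg0 : 0 <= gam) (hg1 : gam < 1)
  (hc1 : b 1%N - b 2%N + gam * b 2%N <= c) (hc2 : c < b 1%N)
  (hc0 : c0 < (1 - gam) * (b 2%N - b 3%N)) :
  forall (n : nat) (e : rel nat),
    reachable b c gam c0 n e -> pairwise_stable b c gam n e -> is_star n e.
Proof.
move=> n e Hr _.
have [_ [k Hk Hadj]] := main_inv hbdec hbpos hg0 hg1 hc1 hc2 hc0 Hr.
exists k => // x y Hx Hy Hxy.
by rewrite Hadj /star Hx Hy Hxy.
Qed.
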